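(* Let $L\in R[x][\partial]$ have order $r>0$, and let $p\in R[x]$ be a primitive polynomial dividing $\mathrm{lc}_\partial(L)$. If there exists a $p$-removing operator for $L$ over $Q_R[x]$, then there exists a $p$-removing operator for $L$ over $R[x]$ of the same order.
   Context: $R$ is a principal ideal domain with quotient field $Q_R$; $\sigma$ is an $R$-automorphism of $R[x]$ with $\sigma(x)=\gamma x+\tau$ ($\gamma$ a unit), $\delta$ an $R$-linear $\sigma$-derivation with $\deg\delta(x)\le1$; $R[x][\partial]$ is the Ore algebra with $\partial p=\sigma(p)\partial+\delta(p)$, contained in $Q_R[x][\partial]\subseteq Q_R(x)[\partial]$. Primitive: coefficients have gcd $1$. For a coefficient ring $D\in\{R[x],Q_R[x]\}$ and $p\in D$ dividing $\mathrm{lc}_\partial(L)$, a $p$-removing operator for $L$ over $D$ of order $k$ is $P\in Q_R(x)[\partial]$ of order $k$ such that $PL\in D[\partial]$ and $\sigma^{-k}(\mathrm{lc}_\partial(PL))=\frac{w}{vp}\mathrm{lc}_\partial(L)$ for some $w,v\in D$ with $\gcd(p,w)=1$ in $D$. *)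

(* Defs.v *)
From HB Require Import structures.
From mathcomp Require Import all_boot all_order all_algebra fraction.
Set Implicit Arguments. Unset Strict Implicit. Unset Printing Implicit Defensive.
Import Order.TTheory GRing.Theory Num.Theory.
Local Open Scope ring_scope.

Notation ratfunK R := ({fraction {poly {fraction R}}}).

Definition dvd_in (D : comNzRingType) (a b : D) : Prop := exists c : D, b = c * a.

Definition coprime_in (D : comUnitRingType) (a b : D) : Prop :=
  forall d : D, dvd_in d a -> dvd_in d b -> d \is a GRing.unit.

Definition PID (R : idomainType) : Prop :=
  forall I : R -> Prop, I 0 ->
    (forall a b, I a -> I b -> I (a + b)) ->
    (forall c a, I a -> I (c * a)) ->
    exists g : R, forall a, I a <-> dvd_in g a.

Definition primitive (R : idomainType) (p : {poly R}) : Prop :=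
  forall d : R, (forall i, dvd_in d p`_i) -> d \is a GRing.unit.

Section Ore.
Variable R : idomainType.
Local Notation QR := {fraction R}.
Local Notation K := (ratfunK R).

Definition fracQ (c : R) : QR := FracField.tofrac c.
Definition embQ (q : {poly QR}) : K := FracField.tofrac q.
Definition embRx (q : {poly R}) : K := embQ (map_poly fracQ q).
Definition embR (c : R) : K := embRx c%:P.
Definition xK : K := embQ 'X.

(* The standing assumptions: sigma is (the extension to Q_R(x) of) the
   R-automorphism of R[x] with sigma(x) = gamma x + tau, gamma a unit,
   sigma_inv its inverse; delta is (the extension to Q_R(x) of) an R-linear
   sigma-derivation with deg delta(x) <= 1. *)
Definition ore_setting (gamma tau : R) (sigma sigma_inv delta : K -> K) : Prop :=
  [/\ gamma \is a GRing.unit,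
      [/\ forall a b, sigma (a + b) = sigma a + sigma b,
          forall a b, sigma (a * b) = sigma a * sigma b,
          sigma 1 = 1,
          cancel sigma sigma_inv & cancel sigma_inv sigma],
      (forall c : R, sigma (embR c) = embR c),
      sigma xK = embRx (gamma *: 'X + tau%:P) &
      [/\ forall a b, delta (a + b) = delta a + delta b,
          forall a b, delta (a * b) = sigma a * delta b + delta a * b,
          forall c : R, delta (embR c) = 0
        & exists q : {poly R}, (size q <= 2)%N /\ delta xK = embRx q]].

Variables (sigma sigma_inv delta : K -> K).

(* Operators in Q_R(x)[D] are represented by their coefficient polynomial
   sum_i P`_i D^i (the additive structure of {poly K}); the product is the
   Ore product with D a = sigma(a) D + delta(a). *)
Definition dmul (Q : {poly K}) : {poly K} :=
  map_poly sigma Q * 'X + map_poly delta Q.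

Definition omul (P L : {poly K}) : {poly K} :=
  \sum_(i < size P) P`_i *: iter i dmul L.

Definition removing (D : comUnitRingType) (emb : D -> K) (p : D)
    (L P : {poly K}) (k : nat) : Prop :=
  [/\ size P = k.+1,
      exists M : {poly D}, omul P L = map_poly emb M
    & exists w v : D, [/\ v != 0, coprime_in p w &
        iter k sigma_inv (lead_coef (omul P L))
          = emb w / (emb v * emb p) * lead_coef L]].

End Ore.

(* Main.v *)
Require Import Defs.
From HB Require Import structures.
From mathcomp Require Import all_boot all_order all_algebra fraction.
From mathcomp Require Import generic_quotient ring.
Import GRing.Theory.
Local Open Scope ring_scope.

Lemma aux_field (F : fieldType) (x y z : F) : x != 0 -> y * z = x * y * (z / x).
Proof. by move=> hx; field. Qed.

Section Helpers.
Variable R : idomainType.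
Local Notation QR := {fraction R}.
Local Notation K := (ratfunK R).

Lemma fracE (x : QR) :
  exists n d : R, d != 0 /\ x = FracField.tofrac n / FracField.tofrac d.
Proof.
exists (\n_(repr x)), (\d_(repr x)); split; first exact: denom_ratioP.
rewrite -{1}[x]reprK.
have -> : forall a b : QR, a / b = FracField.mul a (FracField.inv b) by [].
rewrite !piE.
apply/eqmodP => /=.
rewrite /FracField.equivf /FracField.mulf /FracField.invf.
rewrite !numden_Ratio ?oner_eq0 ?mulf_neq0 ?denom_ratioP //.
- by rewrite !mulr1 !mul1r mulrC.
- exact: oner_neq0.
- exact: oner_neq0.
Qed.

Lemma nth_map0 (A B : nzRingType) (f : A -> B) (f0 : f 0 = 0) (s : seq A) i :
  nth 0 (map f s) i = f (nth 0 s i).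
Proof.
case: (ltnP i (size s)) => hi; first by rewrite (nth_map 0).
by rewrite !nth_default ?size_map.
Qed.

Lemma poly_of_seq (A B C : nzRingType) (f : A -> C) (g : B -> C)
  (f0 : f 0 = 0) (g0 : g 0 = 0) (ys : seq A) (q : {poly B}) :
  map f ys = map g q -> map_poly f (Poly ys) = map_poly g q.
Proof.
move=> h; apply/polyP => i.
rewrite coef_map_id0 // coef_map_id0 // coef_Poly.
by rewrite -nth_map0 // h nth_map0.
Qed.

Lemma scale_map (B : nzRingType) (c : B) (q : {poly B}) :
  map_poly (fun x => c * x) q = c *: q.
Proof. by apply/polyP => i; rewrite coef_map_id0 ?mulr0 // coefZ. Qed.

Definition fQ := (@fracQ R).

Lemma clear_seq (s : seq QR) :
  exists c : R, c != 0 /\ exists ys : seq R,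
    map fQ ys = map (fun x => fQ c * x) s.
Proof.
elim: s => [|x s [c [c0 [ys hys]]]].
  by exists 1; split; [exact: oner_neq0 | exists [::]].
have [n [d [d0 ->]]] := fracE x.
exists (d * c); split; first by rewrite mulf_neq0.
exists (c * n :: map (fun y => d * y) ys) => /=.
have hd : fQ d != 0 by rewrite /fQ /fracQ tofrac_eq0.
congr (_ :: _).
  rewrite /fQ /fracQ !rmorphM /=.
  by apply: aux_field.
rewrite -map_comp.
have -> : map (fun x => fQ (d * c) * x) s = map (fun x => fQ d * x) (map (fun x => fQ c * x) s).
  by rewrite -map_comp; apply: eq_map => y /=; rewrite /fQ /fracQ rmorphM mulrA.
rewrite -hys -map_comp; apply: eq_map => y /=.
by rewrite /fQ /fracQ rmorphM.
Qed.

Lemma clear_poly (q : {poly QR}) :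
  exists c : R, c != 0 /\ exists q' : {poly R},
    map_poly fQ q' = fQ c *: q.
Proof.
have [c [c0 [ys hys]]] := clear_seq q.
exists c; split => //; exists (Poly ys).
rewrite -scale_map; apply: poly_of_seq => //.
by rewrite mulr0.
Qed.

Lemma clear_pseq (s : seq {poly QR}) :
  exists c : R, c != 0 /\ exists ys : seq {poly R},
    map (map_poly fQ) ys = map (fun x => fQ c *: x) s.
Proof.
elim: s => [|x s [c [c0 [ys hys]]]].
  by exists 1; split; [exact: oner_neq0 | exists [::]].
have [d [d0 [x' hx']]] := clear_poly x.
exists (d * c); split; first by rewrite mulf_neq0.
exists (c *: x' :: map (fun y => d *: y) ys) => /=.
congr (_ :: _).
  rewrite /fQ /fracQ map_polyZ /= -/(fracQ _) -/fQ hx' scalerA.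
  by rewrite /fQ /fracQ rmorphM mulrC.
rewrite -map_comp.
have -> : map (fun x => fQ (d * c) *: x) s = map (fun x => fQ d *: x) (map (fun x => fQ c *: x) s).
  by rewrite -map_comp; apply: eq_map => y /=; rewrite /fQ /fracQ rmorphM scalerA.
rewrite -hys -map_comp; apply: eq_map => y /=.
by rewrite /fQ /fracQ map_polyZ.
Qed.

Lemma clear_ppoly (M : {poly {poly QR}}) :
  exists c : R, c != 0 /\ exists M' : {poly {poly R}},
    map_poly (map_poly fQ) M' = (fQ c)%:P *: M.
Proof.
have [c [c0 [ys hys]]] := clear_pseq M.
exists c; split => //; exists (Poly ys).
rewrite -scale_map.
apply: poly_of_seq; first by rewrite map_poly0.
  by rewrite mulr0.
by rewrite hys; apply: eq_map => y; rewrite mul_polyC.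
Qed.

End Helpers.


Lemma embRxM (R : idomainType) (a b : {poly R}) : embRx (a * b) = embRx a * embRx b.
Proof. by rewrite /embRx /embQ /fracQ !rmorphM. Qed.

Lemma embRx_eq0 (R : idomainType) (a : {poly R}) : (embRx a == 0) = (a == 0).
Proof.
rewrite /embRx /embQ tofrac_eq0 -!size_poly_eq0 size_map_inj_poly //.
- by move=> x y /eqP; rewrite /fracQ tofrac_eq => /eqP.
Qed.

Lemma omulZ (R : idomainType) (sigma delta : ratfunK R -> ratfunK R) (a : ratfunK R) P L :
  a != 0 -> omul sigma delta (a *: P) L = a *: omul sigma delta P L.
Proof.
move=> a0; rewrite /omul size_scale // scaler_sumr; apply: eq_bigr => i _.
by rewrite coefZ scalerA.
Qed.

Lemma aux_field2 (F : fieldType) (c b a W V Pp l : F) : a != 0 -> b != 0 ->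
  c * (W / (V * Pp) * l) = c * b * (a * W) / (a * (b * V) * Pp) * l.
Proof.
move=> ha hb.
have [->|hV] := eqVneq V 0; first by rewrite !(mulr0, mul0r, invr0).
have [->|hP] := eqVneq Pp 0; first by rewrite !(mulr0, mul0r, invr0).
by field; rewrite ha hb hV hP.
Qed.

Lemma embRxC (R : idomainType) (x : R) : embRx x%:P = embR x.
Proof. by []. Qed.

Lemma embR_def (R : idomainType) (x : R) : embR x = embQ (fracQ x)%:P.
Proof. by rewrite /embR /embRx /fracQ map_polyC. Qed.

Lemma embRx_scale (R : idomainType) (q : {poly {fraction R}}) (q' : {poly R}) (a : R) :
  map_poly (@fracQ R) q' = fracQ a *: q -> embRx q' = embR a * embQ q.
Proof.
move=> h; rewrite /embRx h -mul_polyC embR_def /embQ.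
exact: rmorphM.
Qed.

Lemma embR_neq0 (R : idomainType) (x : R) : x != 0 -> embR x != 0.
Proof. by move=> hx; rewrite /embR embRx_eq0 polyC_eq0. Qed.

Theorem mainTheorem17 (R : idomainType) (hR : PID R) (gamma tau : R)
    (sigma sigma_inv delta : ratfunK R -> ratfunK R)
    (hore : ore_setting gamma tau sigma sigma_inv delta)
    (L : {poly {poly R}}) (hL : (1 < size L)%N)
    (p : {poly R}) (hp : primitive p) (hpL : dvd_in p (lead_coef L))
    (k : nat) :
  (exists P : {poly ratfunK R},
      removing sigma sigma_inv delta (@embQ R) (map_poly (@fracQ R) p)
        (map_poly (@embRx R) L) P k) ->
  exists P : {poly ratfunK R},
      removing sigma sigma_inv delta (@embRx R) p
        (map_poly (@embRx R) L) P k.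
Proof.
case: hore => hg [sD sM s1 sK sKi] sC sX _.
have siM : forall x y, sigma_inv (x * y) = sigma_inv x * sigma_inv y.
  by move=> x y; rewrite -{1}(sKi x) -{1}(sKi y) -sM sK.
have siC : forall c, sigma_inv (embR c) = embR c.
  by move=> c; rewrite -{1}(sC c) sK.
have itC : forall c x, iter k sigma_inv (embR c * x) = embR c * iter k sigma_inv x.
  by move=> c x; elim: k => [|n IH] //=; rewrite IH siM siC.
move=> [P [hsize [M hM] [w [v [hv0 hcop heq]]]]].
have [c [c0 [M' hM']]] := @clear_ppoly R M.
have [a [a0 [w' hw']]] := @clear_poly R w.
have [b [b0 [v' hv']]] := @clear_poly R v.
have cK0 : embR c != 0 by rewrite /embR embRx_eq0 polyC_eq0.
exists (embR c *: P); split.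
- by rewrite size_scale.
- exists M'; rewrite omulZ // hM.
  apply/polyP => i; rewrite coefZ !coef_map_id0 //=; last by apply/eqP; rewrite embRx_eq0.
  have := congr1 (fun m : {poly {poly {fraction R}}} => m`_i) hM'; rewrite /= coef_map_id0 ?map_poly0 // coefZ => hi.
  rewrite /embRx -/(fQ R) hi /embQ rmorphM /=; congr (_ * _).
  by rewrite /embR /embRx /embQ /fQ /fracQ map_polyC.
have hw2 := @embRx_scale R _ _ _ hw'.
have hv2 := @embRx_scale R _ _ _ hv'.
exists ((c * b)%:P * w'), (a%:P * v'); split.
- apply: mulf_neq0; first by rewrite polyC_eq0.
  rewrite -(@embRx_eq0 R v') hv2; apply: mulf_neq0; first exact: embR_neq0.
  by rewrite /embQ tofrac_eq0.
- move=> d [e he] [f hf].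
  have hu : map_poly (@fracQ R) d \is a GRing.unit.
    apply: hcop.
      exists (map_poly (@fracQ R) e); rewrite he /fracQ.
      exact: rmorphM.
    have hf2 : map_poly (@fracQ R) f * map_poly (@fracQ R) d
               = (fracQ (c * b))%:P * ((fracQ a)%:P * w).
      rewrite [(fracQ a)%:P * w]mul_polyC -hw' /fracQ -map_polyC -!rmorphM -hf.
      by rewrite rmorphM.
    have hcba : fracQ (c * b) * fracQ a != 0.
      by rewrite mulf_neq0 // /fracQ tofrac_eq0 ?mulf_neq0.
    have hw3 : w = ((fracQ (c * b) * fracQ a)^-1)%:P
                   * (map_poly (@fracQ R) f * map_poly (@fracQ R) d).
      by rewrite hf2 !mul_polyC !scalerA mulVf // scale1r.
    exists (((fracQ (c * b) * fracQ a)^-1)%:P * map_poly (@fracQ R) f).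
    exact: (etrans hw3 (mulrA _ _ _)).
  have hs : size d = 1%N.
    move: hu; rewrite poly_unitE size_map_inj_poly.
    + by case/andP => /eqP.
    + by move=> x y /eqP; rewrite /fracQ tofrac_eq => /eqP.
    + exact: tofrac0.
  have hd : d = (d`_0)%:P by apply: size1_polyC; rewrite hs.
  rewrite poly_unitE hs eqxx /=.
  apply: hp => i; exists e`_i.
  by rewrite he {1}hd coefMC.
- rewrite omulZ // lead_coefZ itC heq polyCM !embRxM !embRxC hw2 hv2.
  by apply: aux_field2; apply: embR_neq0.
Qed.
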